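(* Let $S$ be either the $d$-regular tree $\mathbb{T}_d$ or the lattice $\mathbb{Z}^d$, and consider the mutating contact process $(\xi_t)_{t\ge0}$ on $S$ with death rate $\delta>0$ and mutation rate $\mu>0$, started from any initial configuration. Then for every $x\in S$, \[ P\left(\xi_t(x)=1\right)\to0 \quad\text{as } t\to\infty . \]
   Context: Let $S$ be a graph with nearest-neighbour relation $\sim$ ($\mathbb{Z}^d$ with its usual nearest-neighbour structure, or the infinite tree $\mathbb{T}_d$ in which every vertex has exactly $d$ neighbours). The mutating contact process with parameters $\delta>0$ (death rate) and $\mu>0$ (mutation rate) is the Feller process $\xi_t\in\{0,1,2\}^S$ ($0$ = vacant, $1$ = the distinguished strain, $2$ = any other strain) which, writing $n(x,\xi,i)=\#\{y\sim x:\xi(y)=i\}$, makes the following transitions at each site $x$: $i\to0$ at rate $\delta$ ($i=1,2$); $0\to i$ at rate $n(x,\xi,i)$ ($i=1,2$); $1\to2$ at rate $\mu$. *)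

(* Defs.v *)
From HB Require Import structures.
From mathcomp Require Import all_boot all_order all_algebra.
From mathcomp Require Import all_classical all_reals all_analysis.

Set Implicit Arguments.
Unset Strict Implicit.
Unset Printing Implicit Defensive.

Import Order.TTheory GRing.Theory Num.Theory.
Import numFieldNormedType.Exports.
Local Open Scope classical_set_scope.
Local Open Scope ring_scope.

(* A locally finite graph: vertex type with decidable equality and the
   (duplicate-free) list of nearest neighbours of each vertex. *)
Record lgraph := LGraph { vtx : eqType; nbrs : vtx -> seq vtx }.

Definition Zd_vtx (d : nat) : eqType := {ffun 'I_d -> int}.

Definition Zd_nbrs (d : nat) (x : Zd_vtx d) : seq (Zd_vtx d) :=
  flatten [seq [:: ([ffun j => x j + ((i == j) : nat)%:Z] : Zd_vtx d);
                   ([ffun j => x j - ((i == j) : nat)%:Z] : Zd_vtx d)]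
          | i <- enum 'I_d].

Definition Zd_graph (d : nat) : lgraph := @LGraph (Zd_vtx d) (@Zd_nbrs d).

(* ---------- The d-regular tree T_d ----------
   Realised as the Cayley graph of the free product of d copies of Z/2:
   vertices are reduced words (no two consecutive equal letters) over 'I_d,
   and w ~ w' iff one is obtained from the other by appending one letter. *)
Definition reduced (d : nat) (s : seq 'I_d) : bool :=
  sorted (fun a b : 'I_d => a != b) s.

Definition Td_vtx (d : nat) : eqType := {s : seq 'I_d | reduced s}.

Definition Td_nbrs (d : nat) (w : Td_vtx d) : seq (Td_vtx d) :=
  let s := sval w in
  pmap (fun c : seq 'I_d => insub c : option (Td_vtx d))
    ((if s is [::] then [::] else [:: take (size s).-1 s])
       ++ [seq rcons s a | a <- enum 'I_d]).

Definition Td_graph (d : nat) : lgraph := @LGraph (Td_vtx d) (@Td_nbrs d).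

(* states: 0 = vacant, 1 = distinguished strain, 2 = other strains *)
Definition st0 : 'I_3 := @Ordinal 3 0 isT.
Definition st1 : 'I_3 := @Ordinal 3 1 isT.
Definition st2 : 'I_3 := @Ordinal 3 2 isT.

Section MCP.
Variables (R : realType) (G : lgraph).

Definition config := vtx G -> 'I_3.

Definition nb (x : vtx G) (xi : config) (i : 'I_3) : nat :=
  count (fun y => xi y == i) (nbrs x).

Definition mcp_rate (delta mu : R) (x : vtx G) (xi : config) (j : 'I_3) : R :=
  let i := xi x in
  if (i != st0) && (j == st0) then delta
  else if (i == st0) && (j != st0) then (nb x xi j)%:R
  else if (i == st1) && (j == st2) then mu
  else 0.

Definition upd (xi : config) (x : vtx G) (j : 'I_3) : config :=
  fun y => if y == x then j else xi y.

Definition cyl (A : seq (vtx G)) (sigma : config) (xi : config) : bool :=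
  all (fun x => xi x == sigma x) A.

Definition mcp_gen (delta mu : R) (A : seq (vtx G)) (sigma : config)
  (xi : config) : R :=
  \sum_(x <- undup A) \sum_(j : 'I_3)
     mcp_rate delta mu x xi j *
       ((cyl A sigma (upd xi x j))%:R - (cyl A sigma xi)%:R).

(* xi : R -> Omega -> config is (a version of) the mutating contact process
   with parameters delta, mu started from eta: its one-time laws solve the
   Kolmogorov forward equation  d/dt E[f(xi_t)] = E[L f(xi_t)]  for every
   local (cylinder) function f, with initial law the point mass at eta.
   For bounded-rate finite-range systems this determines the one-time
   marginals uniquely (Liggett), and the Feller process satisfies it. *)
Definition is_mcp (delta mu : R) (eta : config)
  (dsp : measure_display) (Omega : measurableType dsp)
  (P : probability Omega R) (xi : R -> Omega -> config) : Prop :=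
  [/\ (forall t x i, measurable [set w | xi t w x = i]),
      (forall x, P [set w | xi 0 w x = eta x] = 1%E) &
      (forall (A : seq (vtx G)) (sigma : config),
         let g := fun t : R => fine (P [set w | cyl A sigma (xi t w)]) in
         g t @[t --> at_right 0] --> g 0 /\
         (forall t : R, 0 < t ->
            is_derive t 1 g
              (fine (\int[P]_w (mcp_gen delta mu A sigma (xi t w))%:E))))].

End MCP.

(* Main.v *)
Require Import Defs.
From HB Require Import structures.
From mathcomp Require Import all_boot all_order all_algebra.
From mathcomp Require Import all_classical all_reals all_analysis.
From mathcomp Require Import ring lra.
Import Order.TTheory GRing.Theory Num.Theory.
Import numFieldNormedType.Exports.
Local Open Scope classical_set_scope.
Local Open Scope ring_scope.

Lemma I3_cases (k : 'I_3) : [\/ k = st0, k = st1 | k = st2].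
Proof.
case: k => [[|[|[|n]]] Hn]; rewrite /st0 /st1 /st2.
- by constructor 1; apply: val_inj.
- by constructor 2; apply: val_inj.
- by constructor 3; apply: val_inj.
- by [].
Qed.

Lemma sum3 (R : nmodType) (F : 'I_3 -> R) : \sum_(k : 'I_3) F k = F st0 + F st1 + F st2.
Proof.
rewrite !big_ord_recr big_ord0 /= add0r.
congr (F _ + F _ + F _); by apply: val_inj.
Qed.

Lemma st10 : (st1 == st0) = false. Proof. by []. Qed.
Lemma st20 : (st2 == st0) = false. Proof. by []. Qed.
Lemma st21 : (st2 == st1) = false. Proof. by []. Qed.
Lemma st01 : (st0 == st1) = false. Proof. by []. Qed.
Lemma st02 : (st0 == st2) = false. Proof. by []. Qed.
Lemma st12 : (st1 == st2) = false. Proof. by []. Qed.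
Definition st_eqs := (st10, st20, st21, st01, st02, st12, eqxx).

Lemma count_natr (R : semiRingType) (T : Type) (P : pred T) (s : seq T) :
  (count P s)%:R = \sum_(z <- s) (P z)%:R :> R.
Proof.
elim: s => [|a s IH]; first by rewrite big_nil.
by rewrite big_cons /= natrD IH.
Qed.

Section Comb.
Variables (R : realType) (G : lgraph) (delta mu : R).
Local Notation V := (vtx G).

Definition sig (y : V) (j : 'I_3) : config G := fun v => if v == y then j else st0.
Definition psi (j : 'I_3) (i : seq V * V) (xi : config G) : bool :=
  cyl (i.2 :: i.1) (sig i.2 j) xi.
Definition Z (A : seq V) (xi : config G) := all (fun a => xi a == st0) A.

Lemma psiE j A y xi : y \notin A -> psi j (A, y) xi = (xi y == j) && Z A xi.
Proof.
move=> yA; rewrite /psi /cyl /= /sig eqxx; congr (_ && _).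
apply: eq_in_all => a aA /=; case: (a =P y) => // ay; by move: yA; rewrite -ay aA.
Qed.

Lemma ZC z A xi : Z (z :: A) xi = (xi z == st0) && Z A xi.
Proof. by []. Qed.

Lemma Z_rem v A xi : uniq A -> v \in A -> Z A xi = (xi v == st0) && Z (rem v A) xi.
Proof. by move=> uA vA; rewrite /Z (perm_all _ (perm_to_rem vA)). Qed.

Lemma Z_upd v A xi k : uniq A -> v \in A ->
  Z A (upd xi v k) = (k == st0) && Z (rem v A) xi.
Proof.
move=> uA vA; rewrite (Z_rem _ _ _ uA vA) /upd eqxx; congr (_ && _).
apply: eq_in_all => a; rewrite (mem_rem_uniq _ uA) => /andP[av _].
by rewrite (negbTE av).
Qed.

Definition nbl (A : seq V) (y : V) : seq (R * (seq V * V)) :=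
  flatten [seq (delta, (rem v A, y)) ::
             [seq (1, (z :: A, y)) | z <- nbrs v & (z \notin A) && (z != y)]
          | v <- A]
  ++ [seq (1, (y :: A, z)) | z <- nbrs y & (z \notin A) && (z != y)].

Definition cc (A : seq V) : R :=
  delta + \sum_(v <- A) (delta + (count (fun z => z \notin A) (nbrs v))%:R).

Lemma term_v j A y v xi : uniq (y :: A) -> v \in A -> (j == st1) || (j == st2) ->
  \sum_(k : 'I_3) mcp_rate delta mu v xi k *
     ((psi j (A, y) (upd xi v k))%:R - (psi j (A, y) xi)%:R)
  = delta * (psi j (rem v A, y) xi)%:R
    + \sum_(z <- nbrs v | (z \notin A) && (z != y)) (psi j (z :: A, y) xi)%:R
    - (delta + (count (fun z => z \notin A) (nbrs v))%:R) * (psi j (A, y) xi)%:R.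
Proof.
move=> uyA vA j12; move: (uyA) => /= /andP[yA uA].
have yv : y != v by apply: contraNneq yA => ->.
have yrA : y \notin rem v A by apply: contra yA; apply: mem_rem.
rewrite sum3 !psiE // !(Z_upd _ _ _ _ uA vA) /upd (negbTE yv).
rewrite big_mkcond /=.
have -> : \sum_(z <- nbrs v) (if (z \notin A) && (z != y) then (psi j (z::A,y) xi)%:R else 0)
   = \sum_(z <- nbrs v) (((z \notin A) && (z != y)) && ((xi y == j) && ((xi z == st0) && Z A xi)))%:R :> R.
  apply: eq_bigr => z _; case: ifP => //= /andP[zA zy].
  by rewrite psiE // inE negb_or eq_sym zy.
rewrite (Z_rem _ _ _ uA vA).
have [Hv|Hv|Hv] := I3_cases (xi v); rewrite /mcp_rate [xi v]Hv ?st_eqs /=.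
- case: (boolP ((xi y == j) && Z (rem v A) xi)) => H.
  + have ZA : Z A xi by rewrite (Z_rem _ _ _ uA vA) [xi v]Hv eqxx; case/andP: H.
    move/andP: (H) => [Hy HZ']; rewrite Hy HZ' /= /nb !count_natr.
    have pw : forall z, ((xi z == st1)%:R + (xi z == st2)%:R : R) =
       (z \notin A)%:R - (((z \notin A) && (z != y)) && (xi z == st0))%:R.
      move=> z; case: (boolP (z \in A)) => zA /=.
        by move/allP: ZA => /(_ z zA) /eqP ->; rewrite !st_eqs subrr addr0.
      case: (z =P y) => [->|zy] /=.
        by move/eqP: Hy => ->; case/orP: j12 => /eqP ->; rewrite !st_eqs /= ?addr0 ?add0r subr0.
      by have [->|->|->] := I3_cases (xi z); rewrite !st_eqs /= ?addr0 ?add0r ?subr0 ?subrr.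
    have -> : \sum_(z <- nbrs v) [&& (z \notin A) && (z != y), true, xi z == st0 & true]%:R
            = \sum_(z <- nbrs v) (((z \notin A) && (z != y)) && (xi z == st0))%:R :> R.
      by apply: eq_bigr => z _; rewrite andbT.
    have E := congr1 (fun f => \sum_(z <- nbrs v) f z) (funext pw).
    rewrite /= big_split /= sumrB in E.
    rewrite mul0r add0r !sub0r !mulrN1 mulr1; lra.
  + rewrite !andbF /= !mulr0 !subrr !mulr0 !addr0 big1 ?addr0 ?subr0 // => z _. apply/eqP; rewrite pnatr_eq0 eqb0; apply: contra H.
    by case/and4P => _ -> _ ->.
- by rewrite !andbF big1 ?mulr0 ?mul0r ?subrr ?subr0 ?addr0 ?mulr0 ?addr0 // => z _; rewrite !andbF.
- by rewrite !andbF big1 ?mulr0 ?mul0r ?subrr ?subr0 ?addr0 ?mulr0 ?addr0 // => z _; rewrite !andbF.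
Qed.

Lemma Z_upd_out v A xi k : v \notin A -> Z A (upd xi v k) = Z A xi.
Proof.
move=> vA; apply: eq_in_all => a aA; rewrite /upd; case: (a =P v) => // av.
by move: vA; rewrite -av aA.
Qed.

Lemma term_y j A y xi : uniq (y :: A) -> (j == st1) || (j == st2) ->
  \sum_(k : 'I_3) mcp_rate delta mu y xi k *
     ((psi j (A, y) (upd xi y k))%:R - (psi j (A, y) xi)%:R)
  = \sum_(z <- nbrs y | (z \notin A) && (z != y)) (psi j (y :: A, z) xi)%:R
    - delta * (psi j (A, y) xi)%:R
    + (if j == st1 then - mu else mu) * (psi st1 (A, y) xi)%:R.
Proof.
move=> uyA j12; move: (uyA) => /= /andP[yA uA].
rewrite sum3 !psiE // !Z_upd_out // /upd eqxx.
rewrite big_mkcond /=.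
have -> : \sum_(z <- nbrs y) (if (z \notin A) && (z != y) then (psi j (y::A,z) xi)%:R else 0)
   = \sum_(z <- nbrs y) (((z \notin A) && (z != y)) && ((xi z == j) && ((xi y == st0) && Z A xi)))%:R :> R.
  apply: eq_bigr => z _; case: ifP => //= /andP[zA zy].
  by rewrite psiE // inE negb_or zy.
case: (boolP (Z A xi)) => ZA; last first.
  rewrite !andbF /= !subrr !mulr0 !addr0 big1 ?subr0 // => z _; by rewrite !andbF.
rewrite !andbT.
have [Hv|Hv|Hv] := I3_cases (xi y); rewrite /mcp_rate [xi y]Hv ?st_eqs /=;
  case/orP: j12 => /eqP -> ; rewrite ?st_eqs /=.
- rewrite /nb count_natr big_mkcond /=; do 3 rewrite ?mul0r ?mulr0 ?subr0 ?add0r ?addr0 ?mulr1.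
  apply: eq_bigr => z _; case: (boolP (z \in A)) => zA /=.
    by move/allP: ZA => /(_ z zA) /eqP ->; rewrite !st_eqs.
  by case: (z =P y) => [->|zy] /=; rewrite ?[xi y]Hv ?st_eqs ?andbT.
- rewrite /nb !count_natr big_mkcond /=; do 3 rewrite ?mul0r ?mulr0 ?subr0 ?add0r ?addr0 ?mulr1.
  apply: eq_bigr => z _; case: (boolP (z \in A)) => zA /=.
    by move/allP: ZA => /(_ z zA) /eqP ->; rewrite !st_eqs.
  by case: (z =P y) => [->|zy] /=; rewrite ?[xi y]Hv ?st_eqs ?andbT.
- rewrite big1; last by move=> z _; rewrite !andbF. clear Hv; ring.
- rewrite big1; last by move=> z _; rewrite !andbF. clear Hv; ring.
- rewrite big1; last by move=> z _; rewrite !andbF. clear Hv; ring.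
- rewrite big1; last by move=> z _; rewrite !andbF. clear Hv; ring.
Qed.

Lemma gen_identity j A y xi : uniq (y :: A) -> (j == st1) || (j == st2) ->
  mcp_gen delta mu (y :: A) (sig y j) xi =
    - cc A * (psi j (A, y) xi)%:R
    + \sum_(k <- nbl A y) k.1 * (psi j k.2 xi)%:R
    + (if j == st1 then - mu else mu) * (psi st1 (A, y) xi)%:R.
Proof.
move=> uyA j12; move: (uyA) => /= /andP[yA uA].
rewrite /mcp_gen undup_id // big_cons (term_y _ _ _ _ uyA j12).
rewrite big_seq_cond.
under eq_bigr => v /andP[vA _] do rewrite (term_v _ _ _ _ _ uyA vA j12).
rewrite -big_seq_cond.
rewrite /nbl big_cat big_flatten /= !big_map.
under [X in _ = _ + (X + _) + _]eq_bigr => v _ do rewrite big_cons big_map /= big_filter.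
rewrite big_filter /=.
under [X in _ = _ + (_ + X) + _]eq_bigr => v _ do rewrite mul1r.
under [X in _ = _ + (X + _) + _]eq_bigr => v _ do (under eq_bigr => z _ do rewrite mul1r).
rewrite /cc big_split /= sumrN -mulr_suml.
ring.
Qed.

Lemma nbl_mem A y k : uniq (y :: A) -> k \in nbl A y ->
  [/\ k.1 = delta \/ k.1 = 1, uniq (k.2.2 :: k.2.1) & (size k.2.1 <= (size A).+1)%N].
Proof.
move=> uyA; move: (uyA) => /= /andP[yA uA].
rewrite /nbl mem_cat => /orP[/flatten_mapP[v vA]|].
  rewrite inE => /orP[/eqP -> /=|].
    split; [by left | | by rewrite size_rem // (leq_trans (leq_pred _) (leqnSn _))].
    by rewrite (rem_uniq _ uA) andbT; apply: contra yA; apply: mem_rem.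
  case/mapP => z; rewrite mem_filter => /andP[/andP[zA zy] _] -> /=.
  by split; [right| rewrite inE negb_or eq_sym zy yA zA uA |].
case/mapP => z; rewrite mem_filter => /andP[/andP[zA zy] _] -> /=.
by split; [right| rewrite inE negb_or zy zA yA uA |].
Qed.

Lemma sum_const_seq (T : Type) (s : seq T) (c : R) : \sum_(i <- s) c = (size s)%:R * c.
Proof. elim: s => [|a s IH]; rewrite ?big_nil ?mul0r // big_cons IH /=; ring. Qed.

Lemma nbl_weight A y (Dl : nat) : 0 <= delta -> (forall v : V, (size (nbrs v) <= Dl)%N) ->
  \sum_(k <- nbl A y) k.1 <= (delta + Dl%:R) * (size A).+1%:R.
Proof.
move=> d0 hD.
rewrite /nbl big_cat big_flatten /= !big_map.
under eq_bigr => v _ do rewrite big_cons big_map /=.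
rewrite big_split /=.
have e1 : \sum_(v <- A) delta = (size A)%:R * delta by apply: sum_const_seq.
have h2 : \sum_(i <- A) \sum_(j <- [seq z <- nbrs i | (z \notin A) && (z != y)]) (1 : R)
   <= (size A)%:R * Dl%:R.
  rewrite -sum_const_seq; apply: ler_sum => v _; rewrite sum_const_seq mulr1.
  by rewrite ler_nat; apply: leq_trans (hD v); rewrite size_filter count_size.
have h3 : \sum_(j <- [seq z <- nbrs y | (z \notin A) && (z != y)]) (1 : R) <= Dl%:R.
  by rewrite sum_const_seq mulr1 ler_nat; apply: leq_trans (hD y); rewrite size_filter count_size.
rewrite e1 -natr1; move: h2 h3.
set a := (\sum_(_ <- _) _); set b := (\sum_(_ <- _) _); set n := (size A)%:R.
have : 0 <= n by rewrite /n. 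
move=> *; nra.
Qed.

Lemma cc_ge0 A : 0 <= delta -> 0 <= cc A.
Proof.
move=> d0; rewrite /cc addr_ge0 // sumr_ge0 // => v _; by rewrite addr_ge0.
Qed.
End Comb.


Lemma Fderiv (R : realType) (f : R -> R) (c t0 b x df : R) (n : nat) :
  is_derive x 1 f df ->
  is_derive x 1 (fun s => expR (c * (s - t0)) * (f s + b * (s - t0) ^+ n.+1))
    (expR (c * (x - t0)) * (c * (f x + b * (x - t0) ^+ n.+1) + df + b * n.+1%:R * (x - t0) ^+ n)).
Proof.
move=> hf.
have h1 : is_derive x 1 (fun s : R => s - t0) 1.
  have := @is_deriveB _ R R id (cst t0) x 1 1 0 _ _.
  rewrite subr0; apply.
have h2 : is_derive x 1 (fun s : R => c * (s - t0)) c.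
  have := @is_deriveZ _ R R (fun s : R => s - t0) c x 1 1 h1.
  by rewrite /GRing.scale /= mulr1.
have h3 : is_derive x 1 (fun s : R => expR (c * (s - t0))) (expR (c * (x - t0)) * c).
  exact: (@is_derive1_comp _ expR (fun s : R => c * (s - t0)) x _ _ _ h2).
have h4 : is_derive x 1 (fun s : R => (s - t0) ^+ n.+1) (n.+1%:R * (x - t0) ^+ n).
  have := @is_deriveX _ R (fun s : R => s - t0) n.+1 x 1 1 h1.
  by rewrite exprfctE /GRing.scale /= mulr1.
have h5 : is_derive x 1 (fun s : R => b * (s - t0) ^+ n.+1) (b * (n.+1%:R * (x - t0) ^+ n)).
  exact: (@is_deriveZ _ R R _ b x 1 _ h4).
have h6 := is_deriveD hf h5.
have h7 := is_deriveM h3 h6.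
apply: trigger_derive h7 _.
rewrite /GRing.scale /= addrfctE /=. ring.
Qed.

Lemma deriv_cont (R : realType) (f : R -> R) (x df : R) : is_derive x (1:R) f df -> {for x, continuous f}.
Proof. move=> h; apply: differentiable_continuous; apply/derivable1_diffP; exact: ex_derive. Qed.

Lemma exp_part_cont (R : realType) (c t0 x : R) :
  {for x, continuous (fun s : R => expR (c * (s - t0)))}.
Proof.
have h1 : is_derive x 1 (fun s : R => s - t0) 1.
  have := @is_deriveB _ R R id (cst t0) x 1 1 0 _ _.
  rewrite subr0; apply.
have h2 : is_derive x 1 (fun s : R => c * (s - t0)) c.
  have := @is_deriveZ _ R R (fun s : R => s - t0) c x 1 1 h1.
  by rewrite /GRing.scale /= mulr1.
exact: deriv_cont (@is_derive1_comp _ expR (fun s : R => c * (s - t0)) x _ _ _ h2).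
Qed.

Lemma poly_part_cont (R : realType) (b t0 x : R) n :
  {for x, continuous (fun s : R => b * (s - t0) ^+ n.+1)}.
Proof.
have h1 : is_derive x 1 (fun s : R => s - t0) 1.
  have := @is_deriveB _ R R id (cst t0) x 1 1 0 _ _.
  rewrite subr0; apply.
have h4 : is_derive x 1 (fun s : R => (s - t0) ^+ n.+1) (n.+1%:R * (x - t0) ^+ n).
  have := @is_deriveX _ R (fun s : R => s - t0) n.+1 x 1 1 h1.
  by rewrite exprfctE /GRing.scale /= mulr1.
exact: deriv_cont (@is_deriveZ _ R R _ b x 1 _ h4).
Qed.

Lemma binid (k N : nat) : (N.+1 * 'C(k + N.+1, N.+1) = k.+1 * 'C(k.+1 + N, N))%N.
Proof.
rewrite mul_bin_left addSn -addnS; congr (_ * _)%N.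
by rewrite addnS subSn ?leq_addl // addnK.
Qed.

Lemma bin_le_exp n m : ('C(n, m) <= 2 ^ n)%N.
Proof.
elim: n m => [|n IH] [|m] //; first by rewrite bin0 expn_gt0.
by rewrite binS expnS mul2n -addnn leq_add.
Qed.

Lemma geo_nonneg (R : realType) (x C : R) : 0 <= C ->
  (forall N : nat, - (C / 2 ^+ N) <= x) -> 0 <= x.
Proof.
move=> C0 h; rewrite leNgt; apply/negP => x0.
have nx0 : 0 < - x by rewrite oppr_gt0.
set n := Num.Def.archi_bound (C / (- x)).
have hn : C / (- x) < n%:R by apply: archi_boundP; rewrite divr_ge0 // ltW.
have h2 : n%:R <= (2:R) ^+ n by rewrite -natrX ler_nat ltnW // ltn_expl.
have p2 : 0 < (2:R) ^+ n by rewrite exprn_gt0.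
rewrite ltr_pdivrMr // in hn.
have : C < 2 ^+ n * - x by apply: lt_le_trans hn _; rewrite ler_wpM2r // ltW.
rewrite -ltr_pdivrMl // => h3.
have := h n; rewrite mulrC; lra.
Qed.

Section Pos.
Context (R : realType) (I : eqType) (inv : I -> Prop) (sz : I -> nat) (c : I -> R)
  (nbl : I -> seq (R * I)) (D : I -> R -> R) (al B T : R).
Hypotheses (hal : 0 < al) (hB0 : 0 <= B)
  (hc : forall i, inv i -> 0 <= c i)
  (hnb : forall i, inv i -> forall k, k \in nbl i -> [/\ 0 <= k.1, inv k.2 & (sz k.2 <= (sz i).+1)%N])
  (hw : forall i, inv i -> \sum_(k <- nbl i) k.1 <= al * (sz i).+1%:R)
  (hder : forall i, inv i -> forall t : R, 0 < t ->
     is_derive t (1:R) (D i) (- c i * D i t + \sum_(k <- nbl i) k.1 * D k.2 t))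
  (hcont : forall i, inv i -> D i t @[t --> (0:R)^'+] --> D i 0)
  (hB : forall i, inv i -> forall t : R, 0 <= t -> t <= T -> - B <= D i t).

Lemma Dright i t0 : inv i -> 0 <= t0 -> D i s @[s --> t0^'+] --> D i t0.
Proof.
move=> invi; rewrite le_eqVlt => /orP[/eqP <-|t0p]; first exact: hcont.
by apply: cvg_at_right_filter; apply: deriv_cont (hder _ invi _ t0p).
Qed.


Lemma inner t0 : 0 <= t0 -> (forall i, inv i -> 0 <= D i t0) ->
  forall N i, inv i -> forall t, t0 <= t -> t <= T ->
   - (B * ('C(sz i + N, N))%:R * (al * (t - t0)) ^+ N) <= D i t.
Proof.
move=> t00 hD0; elim=> [|N IH] i invi t t0t tT.
  by rewrite addn0 bin0 expr0 !mulr1; apply: hB => //; apply: le_trans t0t.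
have [tt0|tnt0] := eqVneq t t0.
  by rewrite tt0 subrr mulr0 expr0n /= mulr0 oppr0; exact: hD0.
have lt : t0 < t by rewrite lt_neqAle eq_sym tnt0 t0t.
set k := sz i.
set beta := B * ('C(k + N.+1, N.+1))%:R * al ^+ N.+1.
set F := fun s => expR (c i * (s - t0)) * (D i s + beta * (s - t0) ^+ N.+1).
set dD := fun x => - c i * D i x + \sum_(k <- nbl i) k.1 * D k.2 x.
have dF : forall x : R, 0 < x -> is_derive x (1:R) F (expR (c i * (x - t0)) *
   (c i * (D i x + beta * (x - t0) ^+ N.+1) + dD x + beta * N.+1%:R * (x - t0) ^+ N)).
  move=> x x0; exact: Fderiv (hder _ invi _ x0).
have Fc : {within `[t0, t], continuous F}.
  apply/continuous_within_itvP => //; split.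
  - move=> x; rewrite in_itv /= => /andP[x1 x2]; apply: deriv_cont (dF x _).
    exact: le_lt_trans x1.
  - apply: cvgM; first by apply: cvg_at_right_filter; apply: exp_part_cont.
    apply: cvgD; first exact: Dright.
    by apply: cvg_at_right_filter; apply: poly_part_cont.
  - by apply: cvg_at_left_filter; apply: deriv_cont (dF t _); apply: le_lt_trans lt.
have xpos : forall x, x \in `]t0, t[ -> 0 < x.
  by move=> y; rewrite in_itv /= => /andP[y1 _]; exact: le_lt_trans t00 y1.
have [x xin E] := MVT lt (fun x xin => dF x (xpos x xin)) Fc.
have [x1 x2] : t0 < x /\ x < t by move: xin; rewrite in_itv /= => /andP.
set p := x - t0.
have p0 : 0 < p by rewrite subr_gt0.
set M := B * ('C(k.+1 + N, N))%:R * (al * p) ^+ N.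
have M0 : 0 <= M by rewrite mulr_ge0 ?mulr_ge0 ?exprn_ge0 ?mulr_ge0 // ltW.
have hsum : - (al * k.+1%:R) * M <= \sum_(k <- nbl i) k.1 * D k.2 x.
  apply: le_trans (_ : \sum_(k <- nbl i) k.1 * (- M) <= _).
    rewrite -mulr_suml mulNr mulrN lerN2; apply: ler_wpM2r => //; exact: hw.
  rewrite big_seq_cond [X in _ <= X]big_seq_cond; apply: ler_sum => kk /andP[kin _].
  have [w0 invk szk] := hnb _ invi _ kin.
  apply: ler_wpM2l => //.
  apply: le_trans (IH _ invk x (ltW x1) (ltW (lt_le_trans x2 tT))).
  rewrite lerN2 /M -/p; apply: ler_wpM2r; first by rewrite exprn_ge0 // mulr_ge0 // ltW.
  apply: ler_wpM2l => //; rewrite ler_nat; apply: leq_bin2l; by rewrite leq_add2r.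
have hb : beta * N.+1%:R = al * k.+1%:R * B * ('C(k.+1 + N, N))%:R * al ^+ N.
  rewrite /beta exprS; have := binid k N => /(congr1 (fun n => n%:R : R)); rewrite !natrM => hh.
  transitivity (B * al * al ^+ N * (N.+1%:R * ('C(k + N.+1, N.+1))%:R)); first ring.
  rewrite hh; ring.
have inner0 : 0 <= c i * (D i x + beta * p ^+ N.+1) + dD x + beta * N.+1%:R * p ^+ N.
  rewrite /dD hb.
  have cb : 0 <= c i * beta * p ^+ N.+1.
    by rewrite !mulr_ge0 ?exprn_ge0 ?hc // ltW.
  move: hsum; rewrite /M exprMn => hsum.
  set S := \sum_(_ <- _) _ in hsum *.
  lra.
have hFt0 : F t0 = D i t0.
  by rewrite /F subrr mulr0 expR0 mul1r expr0n /= mulr0 addr0.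
have hF : 0 <= F t.
  have := hD0 _ invi; rewrite -hFt0 => h0.
  have : 0 <= F t - F t0.
    rewrite E; apply: mulr_ge0; last by rewrite subr_ge0.
    by apply: mulr_ge0 => //; apply: ltW; apply: expR_gt0.
  lra.
rewrite /F pmulr_rge0 ?expR_gt0 // in hF.
rewrite exprMn; move: hF; rewrite /beta; lra.
Qed.


Lemma Dpos (h0 : forall i, inv i -> 0 <= D i 0) :
  forall i, inv i -> forall t, 0 <= t -> t <= T -> 0 <= D i t.
Proof.
set h := (4 * al)^-1.
have hp : 0 < h by rewrite invr_gt0 mulr_gt0.
have alh : al * h = 4^-1 by rewrite /h invfM mulrA mulrC mulrA mulVf ?gt_eqF // mul1r.
have step : forall m : nat, forall i, inv i -> forall t, 0 <= t -> t <= T ->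
    t <= m%:R * h -> 0 <= D i t.
  elim=> [|m IH] i invi t t0 tT tm.
    have -> : t = 0 by apply/eqP; rewrite eq_le t0 andbT; rewrite mul0r in tm.
    exact: h0.
  case: (leP t (m%:R * h)) => [tm'|tm']; first exact: IH.
  set t0' := m%:R * h in tm'.
  have t00 : 0 <= t0' by rewrite mulr_ge0 // ltW.
  have hD0 : forall j, inv j -> 0 <= D j t0'.
    by move=> j invj; apply: IH => //; apply: le_trans (ltW tm') tT.
  have bnd := @inner t0' t00 hD0.
  apply: (@geo_nonneg R _ (B * 2 ^+ sz i)); first by rewrite mulr_ge0 // exprn_ge0.
  move=> N; apply: le_trans (bnd N i invi t (ltW tm') tT).
  rewrite lerN2.
  have ha0 : 0 <= al * (t - t0') by rewrite mulr_ge0 ?subr_ge0 // ltW.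
  have ha : al * (t - t0') <= 4^-1.
    rewrite -alh; apply: ler_wpM2l; first exact: ltW.
    move: tm; rewrite /t0' -natr1 mulrDl mul1r; lra.
  have hC : ('C(sz i + N, N))%:R <= (2:R) ^+ sz i * 2 ^+ N.
    by rewrite -exprD -natrX ler_nat bin_le_exp.
  have hX : (al * (t - t0')) ^+ N <= (4^-1 : R) ^+ N.
    by apply: lerXn2r => //; rewrite nnegrE // invr_ge0.
  have e : (2:R) ^+ N * (4^-1) ^+ N = (2 ^+ N)^-1.
    by rewrite -exprMn -exprVn; congr (_ ^+ _); field.
  apply: le_trans (_ : B * (2 ^+ sz i * 2 ^+ N) * (4^-1) ^+ N <= _).
    rewrite -mulrA -[X in _ <= X]mulrA; apply: ler_wpM2l => //.
    apply: ler_pM => //; by rewrite exprn_ge0.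
  by rewrite -mulrA -[X in _ <= X]mulrA -mulrA e.
move=> i invi t t0 tT.
apply: (step (Num.Def.archi_bound (t / h))) => //.
rewrite -ler_pdivrMr //; apply: ltW; apply: archi_boundP.
by rewrite divr_ge0 // ltW.
Qed.

End Pos.


Section Glue.
Context (R : realType) (G : lgraph) (dsp : measure_display) (Omega : measurableType dsp)
  (P : probability Omega R) (xi : R -> Omega -> config G).
Hypothesis hmeas : forall t x i, measurable [set w | xi t w x = i].

Lemma meas_cyl t L (s : config G) : measurable [set w | cyl L s (xi t w)].
Proof.
elim: L => [|a L IH].
  have -> : [set w | cyl [::] s (xi t w)] = setT by apply/seteqP; split.
  exact: measurableT.
have -> : [set w | cyl (a :: L) s (xi t w)] = [set w | xi t w a = s a] `&` [set w | cyl L s (xi t w)].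
  apply/seteqP; split => w /=; rewrite /cyl /=.
    by case/andP => /eqP -> ->.
  by case=> -> ->; rewrite eqxx.
exact: measurableI.
Qed.

Lemma fin_P (E : set Omega) : measurable E -> P E \is a fin_num.
Proof. move=> mE; exact: fin_num_measure. Qed.

Lemma p01 (E : set Omega) : measurable E -> 0 <= fine (P E) <= 1.
Proof.
move=> mE; rewrite fine_ge0 ?measure_ge0 //=.
have := probability_le1 P mE; rewrite -(fineK (fin_P _ mE)) lee_fin //.
Qed.

Lemma int_lincomb (s : seq (R * (Omega -> bool))) :
  (forall k, List.In k s -> measurable [set w | k.2 w]) ->
  P.-integrable setT (fun w => (\sum_(k <- s) k.1 * (k.2 w)%:R)%:E) /\
  (\int[P]_w (\sum_(k <- s) k.1 * (k.2 w)%:R)%:E = (\sum_(k <- s) k.1 * fine (P [set w | k.2 w]))%:E)%E.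
Proof.
elim: s => [|k s IH] hm.
  split.
    under eq_fun do rewrite big_nil.
    exact: integrable0.
  under eq_integral do rewrite big_nil.
  by rewrite big_nil integral0.
have [iS eS] := IH (fun k' hk' => hm k' (or_intror hk')).
have mk := hm k (or_introl erefl).
have hf : (fun w => (\sum_(k0 <- k :: s) k0.1 * (k0.2 w)%:R)%:E) =
  (fun w => k.1%:E * (\1_[set w | k.2 w] w)%:E + (\sum_(k0 <- s) k0.1 * (k0.2 w)%:R)%:E)%E.
  apply/funext => w; rewrite big_cons EFinD EFinM indicE mem_setE //.
rewrite hf; split.
  apply: integrableD => //; apply: integrableZl => //; exact: integrable_indic.
rewrite integralD //; last by apply: integrableZl => //; exact: integrable_indic.
rewrite integralZl //; last exact: integrable_indic.
rewrite integral_indic // setIT eS big_cons EFinD EFinM fineK //; exact: fin_P.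
Qed.

Context (delta mu : R).
Hypothesis hgen : forall (A : seq (vtx G)) (sigma : config G),
  let g := fun t : R => fine (P [set w | cyl A sigma (xi t w)]) in
  g t @[t --> 0^'+] --> g 0 /\
  (forall t : R, 0 < t -> is_derive t 1 g
     (fine (\int[P]_w (mcp_gen delta mu A sigma (xi t w))%:E))).

Definition p (j : 'I_3) (i : seq (vtx G) * vtx G) (t : R) : R :=
  fine (P [set w | psi G j i (xi t w)]).

Lemma p_cont j i : p j i t @[t --> 0^'+] --> p j i 0.
Proof. exact: (hgen (i.2 :: i.1) (sig G i.2 j)).1. Qed.

Lemma p_der j (A : seq (vtx G)) (y : vtx G) (t : R) : uniq (y :: A) -> (j == st1) || (j == st2) -> 0 < t ->
  is_derive t (1:R) (p j (A, y))
    (- cc R G delta A * p j (A, y) t + \sum_(k <- nbl R G delta A y) k.1 * p j k.2 t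
     + (if j == st1 then - mu else mu) * p st1 (A, y) t).
Proof.
move=> uyA j12 t0.
have := (hgen (y :: A) (sig G y j)).2 t t0.
set s := (- cc R G delta A, fun w => psi G j (A, y) (xi t w)) ::
         ((if j == st1 then - mu else mu), fun w => psi G st1 (A, y) (xi t w)) ::
         [seq (k.1, fun w => psi G j k.2 (xi t w)) | k <- nbl R G delta A y].
have hpt : forall w, mcp_gen delta mu (y :: A) (sig G y j) (xi t w) =
    \sum_(k <- s) k.1 * (k.2 w)%:R.
  move=> w; rewrite gen_identity // !big_cons big_map /=; ring.
under eq_integral do rewrite hpt.
have hm : forall k, List.In k s -> measurable [set w | k.2 w].
  move=> k; rewrite /s /= => -[<-|[<-|]]; try exact: meas_cyl.
  by case/List.in_map_iff => k' [<- _]; exact: meas_cyl.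
rewrite (int_lincomb _ hm).2 /= !big_cons big_map /= => h.
apply: trigger_derive h _; rewrite /p; ring.
Qed.

Definition Dfun (i : seq (vtx G) * vtx G) (t : R) : R :=
  p st2 i t + (1 - expR (mu * t)) * p st1 i t.

Lemma e_der (t : R) : is_derive t (1:R) (fun s : R => 1 - expR (mu * s)) (- (expR (mu * t) * mu)).
Proof.
have h1 : is_derive t (1:R) (fun s : R => mu * s) mu.
  have := @is_deriveZ _ R R id mu t 1 1 (is_derive_id t 1).
  by rewrite /GRing.scale /= mulr1.
have h2 := @is_derive1_comp _ expR (fun s : R => mu * s) t _ _ (is_derive_expR (mu * t)) h1.
have h3 := is_deriveB (is_derive_cst (1:R) t 1) h2.
apply: trigger_derive h3 _; by rewrite sub0r.
Qed.

Lemma D_der (A : seq (vtx G)) (y : vtx G) (t : R) : uniq (y :: A) -> 0 < t ->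
  is_derive t (1:R) (Dfun (A, y))
    (- cc R G delta A * Dfun (A, y) t + \sum_(k <- nbl R G delta A y) k.1 * Dfun k.2 t).
Proof.
move=> uyA t0.
have h2 := p_der st2 _ _ _ uyA isT t0.
have h1 := p_der st1 _ _ _ uyA isT t0.
rewrite st21 in h2; rewrite eqxx in h1.
have h := is_deriveD h2 (is_deriveM (e_der t) h1).
apply: trigger_derive h _.
rewrite /Dfun.
under [X in _ = _ + X]eq_bigr => k _ do rewrite mulrDr mulrCA.
rewrite big_split /= -mulr_sumr /GRing.scale /=.
ring.
Qed.

Lemma D_cont i : Dfun i t @[t --> 0^'+] --> Dfun i 0.
Proof.
rewrite /Dfun; apply: cvgD; first exact: p_cont.
apply: cvgM; last exact: p_cont.
by apply: cvg_at_right_filter; apply: deriv_cont (e_der 0).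
Qed.

Lemma p01' j i t : 0 <= p j i t <= 1.
Proof. exact: p01 (meas_cyl _ _ _). Qed.

Lemma D_bound (T : R) i t : 0 <= mu -> 0 <= t -> t <= T -> - expR (mu * T) <= Dfun i t.
Proof.
move=> mu0 t0 tT.
have /andP[a1 b1] := p01' st1 i t.
have /andP[a2 b2] := p01' st2 i t.
have e1 : 1 <= expR (mu * t).
  by apply: le_trans (expR_ge1Dx _); rewrite lerDl mulr_ge0.
have e2 : expR (mu * t) <= expR (mu * T) by rewrite ler_expR ler_wpM2l.
rewrite /Dfun; move: a1 b1 a2 b2 e1 e2.
set q1 := p st1 i t; set q2 := p st2 i t; set e := expR (mu * t).
move=> *; nra.
Qed.

Lemma D0 i : 0 <= Dfun i 0.
Proof.
by rewrite /Dfun mulr0 expR0 subrr mul0r addr0; have /andP[] := p01' st2 i 0.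
Qed.

Lemma D_nonneg (d : nat) (hdeg : forall v : vtx G, (size (nbrs v) <= (2 * d).+1)%N)
  (hdelta : 0 < delta) (hmu : 0 <= mu) (i : seq (vtx G) * vtx G) (t : R) :
  uniq (i.2 :: i.1) -> 0 <= t -> 0 <= Dfun i t.
Proof.
move=> invi t0.
apply: (@Dpos R _ (fun i => uniq (i.2 :: i.1)) (fun i => size i.1)
  (fun i => cc R G delta i.1) (fun i => nbl R G delta i.1 i.2) Dfun
  (delta + (2 * d).+1%:R) (expR (mu * t)) t) => //.
- by apply: ltr_wpDr.
- by move=> i' _; apply: cc_ge0; apply: ltW.
- move=> [A y] /= uyA k kin; have [h1 h2 h3] := nbl_mem _ _ _ _ _ _ uyA kin.
  by split => //; case: h1 => ->; [apply: ltW|apply: ler01].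
- move=> [A y] _ /=; apply: nbl_weight => //; exact: ltW.
- by move=> [A y] /= uyA s s0; apply: D_der.
- by move=> i' _; apply: D_cont.
- by move=> i' _ s s0 sT; apply: D_bound.
- by move=> i' _; apply: D0.
Qed.
End Glue.


From mathcomp Require Import zify.

Lemma size_flat2 (T I : Type) (f g : I -> T) (s : seq I) :
  size (flatten [seq [:: f i; g i] | i <- s]) = (2 * size s)%N.
Proof. by elim: s => //= a s IH; rewrite IH mulnS. Qed.

Lemma deg_bound d G : G = Zd_graph d \/ G = Td_graph d ->
  forall v : vtx G, (size (nbrs v) <= (2 * d).+1)%N.
Proof.
case=> -> v /=.
  by rewrite /Zd_nbrs size_flat2 size_enum_ord.
rewrite /Td_nbrs size_pmap; apply: leq_trans (count_size _ _) _.
rewrite size_cat size_map size_enum_ord; case: (sval v) => [|a s] /=; lia.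
Qed.


Theorem theorem2 (R : realType) (d : nat) (hd : (1 <= d)%N) (G : lgraph)
  (hG : G = Zd_graph d \/ G = Td_graph d)
  (delta mu : R) (hdelta : 0 < delta) (hmu : 0 < mu)
  (eta : config G)
  (dsp : measure_display) (Omega : measurableType dsp)
  (P : probability Omega R) (xi : R -> Omega -> config G)
  (hxi : is_mcp delta mu eta P xi) (x : vtx G) :
  P [set w | xi t w x = st1] @[t --> +oo] --> 0%E.
Proof.
case: hxi => hm _ hg.
have hdeg := deg_bound _ _ hG.
set q := fun j t => p R G dsp Omega P xi j ([::], x) t.
have hset : (fun t => P [set w | xi t w x = st1]) = (fun t => (q st1 t)%:E).
  apply/funext => t; rewrite /q /p fineK; last exact: fin_P (meas_cyl _ _ _ _ _ hm _ _ _).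
  congr (P _); apply/seteqP; split => w /=; rewrite /psi /cyl /sig /= eqxx andbT.
    by move=> ->.
  by move/eqP.
have key : forall t, 0 < t -> q st1 t <= (mu * t)^-1.
  move=> t t0.
  have hD := D_nonneg _ _ _ _ P _ hm _ _ hg _ hdeg hdelta (ltW hmu) ([::], x) t isT (ltW t0).
  rewrite /Dfun in hD.
  have /andP[a1 b1] := p01' _ _ _ _ P _ hm st1 ([::], x) t.
  have /andP[a2 b2] := p01' _ _ _ _ P _ hm st2 ([::], x) t.
  have e1 : 1 + mu * t <= expR (mu * t) by apply: expR_ge1Dx.
  have mt0 : 0 < mu * t by rewrite mulr_gt0.
  rewrite -(ler_pM2l mt0) mulfV ?gt_eqF //.
  rewrite /q; move: hD a1 b1 a2 b2 e1.
  set q1 := p _ _ _ _ _ _ st1 _ _; set q2 := p _ _ _ _ _ _ st2 _ _; set e := expR _.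
  move=> *; nra.
rewrite hset; apply: cvg_EFin; first by near=> t.
apply/cvgrPdist_le => e e0.
near=> t.
have tgt : (mu * e)^-1 < t by near: t; apply: nbhs_pinfty_gt; exact: num_real.
have t0 : 0 < t by apply: le_lt_trans tgt; rewrite invr_ge0 mulr_ge0 // ltW.
have /andP[a1 _] := p01' _ _ _ _ P _ hm st1 ([::], x) t.
rewrite /= sub0r normrN ger0_norm //.
apply: le_trans (key t t0) _.
rewrite invf_ple ?posrE ?mulr_gt0 //.
have -> : e^-1 = mu * (mu * e)^-1 by rewrite invfM mulrA mulfV ?gt_eqF // mul1r.
by rewrite ler_pM2l // ltW.
Unshelve. all: end_near.
Qed.
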